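(* Let $P$ be a finite poset and let $r$ be the length of the longest chains of $P$. The following are equivalent: (1) $\mathbb{E}(\mathrm{chain}(k);\mathrm{ddeg})=\mathbb{E}(\mathrm{uni};\mathrm{ddeg})$ for all $k=0,1,\ldots,r$; (2) $\mathbb{E}(\mathrm{mchain}(m);\mathrm{ddeg})=\mathbb{E}(\mathrm{uni};\mathrm{ddeg})$ for all $m\geq 0$; (3) $\mathbb{E}(\mathrm{mchain}(m);\mathrm{ddeg})=\mathbb{E}(\mathrm{uni};\mathrm{ddeg})$ for all $m=0,1,\ldots,r$; (4) $\mathbb{E}(\widehat{\mathrm{mchain}}(m);\mathrm{ddeg})=\mathbb{E}(\mathrm{uni};\mathrm{ddeg})$ for all $m\geq 0$; (5) $\mathbb{E}(\widehat{\mathrm{mchain}}(m);\mathrm{ddeg})=\mathbb{E}(\mathrm{uni};\mathrm{ddeg})$ for all $m=0,1,\ldots,r$.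
   Context: All posets are finite. For a probability distribution $\mu$ on $P$ and a function $f\colon P\to\mathbb{R}$, $\mathbb{E}(\mu;f)=\sum_{p\in P}f(p)\,\mathbb{P}(\mu;p)$. The down-degree $\mathrm{ddeg}(p)$ is the number of elements covered by $p$. $\mathrm{uni}$ is the uniform distribution on $P$. A $k$-chain is a sequence $c_0<c_1<\cdots<c_k$ of elements of $P$; an $m$-multichain is a sequence $c_0\le c_1\le\cdots\le c_m$; we write $p\in c$ if $p=c_i$ for some $i$. The $k$-chain distribution is $\mathbb{P}(\mathrm{chain}(k);p)=\#\{k\text{-chains } c: p\in c\}/\big((k+1)\cdot\#\{k\text{-chains}\}\big)$. The $m$-multichain distribution $\mathrm{mchain}(m)$ gives $p$ probability proportional to the number of $m$-multichains $c$ with $p\in c$ (normalized to total probability 1). The modified $m$-multichain distribution is $\mathbb{P}(\widehat{\mathrm{mchain}}(m);p)=\#\{(c,i): c\text{ an }m\text{-multichain},\ c_i=p\}/\big((m+1)\cdot\#\{m\text{-multichains}\}\big)$. *)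

(* Defs.v *)
From HB Require Import structures.
From mathcomp Require Import all_boot all_order all_algebra.
Set Implicit Arguments. Unset Strict Implicit. Unset Printing Implicit Defensive.
Import Order.TTheory GRing.Theory Num.Theory.

Section PosetDistributions.
Variables (d : Order.disp_t) (P : finPOrderType d).

Local Open Scope order_scope.

Definition coversb (q p : P) : bool :=
  (q < p) && [forall z : P, ~~ ((q < z) && (z < p))].

Definition ddeg (p : P) : nat := #|[set q : P | coversb q p]|.

Definition chains (k : nat) : {set k.+1.-tuple P} :=
  [set c : k.+1.-tuple P | sorted (fun x y : P => x < y) c].

Definition mchains (m : nat) : {set m.+1.-tuple P} :=
  [set c : m.+1.-tuple P | sorted (fun x y : P => x <= y) c].

Local Close Scope order_scope.
Local Open Scope ring_scope.

Definition uni (p : P) : rat := 1 / (#|P|%:R).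

Definition chain_dist (k : nat) (p : P) : rat :=
  #|[set c in chains k | p \in (c : seq P)]|%:R
    / ((k.+1)%:R * #|chains k|%:R).

Definition mchain_dist (m : nat) (p : P) : rat :=
  #|[set c in mchains m | p \in (c : seq P)]|%:R
    / (\sum_(q : P) #|[set c in mchains m | q \in (c : seq P)]|%:R).

Definition mchain_hat_dist (m : nat) (p : P) : rat :=
  (\sum_(c in mchains m) #|[set i : 'I_m.+1 | tnth c i == p]|%:R)
    / ((m.+1)%:R * #|mchains m|%:R).

Definition expect (mu : P -> rat) (f : P -> nat) : rat :=
  \sum_(p : P) (f p)%:R * mu p.

End PosetDistributions.

(* Main.v *)
Require Import Defs.
From HB Require Import structures.
From mathcomp Require Import all_boot all_order all_algebra.
Import Order.TTheory GRing.Theory Num.Theory.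
Set Implicit Arguments. Unset Strict Implicit. Unset Printing Implicit Defensive.

Section Aux.
Variables (d : Order.disp_t) (P : finPOrderType d).
Local Open Scope ring_scope.
Notation Rlt := (fun x y : P => (x < y)%O).
Notation Rle := (fun x y : P => (x <= y)%O).

Lemma tupleS_sum n (F : seq P -> rat) :
  \sum_(c : n.+1.-tuple P) F c = \sum_(x : P) \sum_(c : n.-tuple P) F (x :: c).
Proof.
rewrite pair_big /=.
rewrite (reindex (fun p : P * n.-tuple P => [tuple of p.1 :: p.2])) /=.
  by apply: eq_bigr => -[x c] _.
exists (fun c : n.+1.-tuple P => (thead c, [tuple of behead c])) => [[x c] _ | c _] /=.
  by congr (_, _); apply: val_inj.
by rewrite [RHS]tuple_eta.
Qed.

Lemma tuple0_sum (F : 0.-tuple P -> rat) : \sum_(c : 0.-tuple P) F c = F [tuple].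
Proof. by rewrite (big_pred1 [tuple]) // => t /=; rewrite [t]tuple0; apply/esym/eqP. Qed.

Lemma andb_natr (a b : bool) : ((a && b)%:R : rat) = a%:R * b%:R.
Proof. by case: a; case: b; rewrite /= ?(mulr1n, mulr0n, mul1r, mul0r). Qed.

Definition Wset (w : P -> rat) (s : seq P) := \sum_(p : P) (p \in s)%:R * w p.
Definition Wpos (w : P -> rat) (s : seq P) := \sum_(x <- s) w x.

Lemma Wset_in w x s : x \in s -> Wset w (x :: s) = Wset w s.
Proof. move=> xs; apply: eq_bigr => p _; rewrite in_cons; case: eqP => // ->; by rewrite xs. Qed.

Lemma Wset_notin w x s : x \notin s -> Wset w (x :: s) = w x + Wset w s.
Proof.
move=> xs; rewrite /Wset (bigD1 x) //= [in RHS](bigD1 x) //= in_cons eqxx (negbTE xs) /=.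
rewrite mul0r add0r mulr1n mul1r; congr (_ + _).
by apply: eq_bigr => p /negbTE px; rewrite in_cons px.
Qed.

Lemma Wset1 w x : Wset w [:: x] = w x.
Proof.
rewrite (@Wset_notin w x [::]) // /Wset big1 ?addr0 // => p _.
by rewrite in_nil mul0r.
Qed.

Lemma notin_path (x y : P) (c : seq P) : (x < y)%O -> path Rle y c -> x \notin y :: c.
Proof.
move=> xy py; rewrite in_cons negb_or lt_eqF //=.
apply/negP=> xc.
have := order_path_min le_trans py => /allP /(_ x xc) yx.
by have := lt_le_trans xy yx; rewrite ltxx.
Qed.

Lemma cons_split (R : rel P) n x (F : seq P -> rat) :
  \sum_(c : n.+1.-tuple P) (sorted R (x :: c))%:R * F (x :: c)
  = \sum_y (R x y)%:R * \sum_(c : n.-tuple P) (sorted R (y :: c))%:R * F (x :: y :: c).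
Proof.
rewrite (tupleS_sum n (fun s => (sorted R (x :: s))%:R * F (x :: s))).
apply: eq_bigr => y _; rewrite mulr_sumr; apply: eq_bigr => c _ /=.
by rewrite andb_natr mulrA.
Qed.

Lemma sum_le_split x (T : P -> rat) :
  \sum_y (x <= y)%O%:R * T y = T x + \sum_y (x < y)%O%:R * T y.
Proof.
rewrite (bigD1 x) // [in X in _ = _ + X](bigD1 x) //= lexx ltxx mulr1n mul1r mul0r add0r.
congr (_ + _); apply: eq_bigr => y yx; by rewrite lt_neqAle eq_sym yx.
Qed.


Definition Gf w k x := \sum_(c : k.-tuple P) (sorted Rlt (x :: c))%:R * Wset w (x :: c).
Definition Nf k x := \sum_(c : k.-tuple P) (sorted Rlt (x :: c))%:R * (fun _ => 1 : rat) (x :: c).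
Definition Hf w m x := \sum_(c : m.-tuple P) (sorted Rle (x :: c))%:R * Wset w (x :: c).
Definition Lf m x := \sum_(c : m.-tuple P) (sorted Rle (x :: c))%:R * (fun _ => 1 : rat) (x :: c).
Definition Kf w m x := \sum_(c : m.-tuple P) (sorted Rle (x :: c))%:R * Wpos w (x :: c).

Lemma Nf0 x : Nf 0 x = 1.
Proof. by rewrite /Nf tuple0_sum /= mulr1n mulr1. Qed.
Lemma Lf0 x : Lf 0 x = 1.
Proof. by rewrite /Lf tuple0_sum /= mulr1n mulr1. Qed.
Lemma Gf0 w x : Gf w 0 x = w x.
Proof. by rewrite /Gf tuple0_sum /= mulr1n mul1r Wset1. Qed.
Lemma Hf0 w x : Hf w 0 x = w x.
Proof. by rewrite /Hf tuple0_sum /= mulr1n mul1r Wset1. Qed.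
Lemma Kf0 w x : Kf w 0 x = w x.
Proof. by rewrite /Kf tuple0_sum /= mulr1n mul1r /Wpos big_seq1. Qed.

Lemma NfS k x : Nf k.+1 x = \sum_y (x < y)%O%:R * Nf k y.
Proof. by rewrite /Nf (cons_split _ _ _ (fun _ => 1)). Qed.

Lemma LfS m x : Lf m.+1 x = Lf m x + \sum_y (x < y)%O%:R * Lf m y.
Proof. by rewrite /Lf (cons_split _ _ _ (fun _ => 1)) sum_le_split. Qed.

Lemma GfS w k x : Gf w k.+1 x = \sum_y (x < y)%O%:R * (w x * Nf k y + Gf w k y).
Proof.
rewrite /Gf cons_split; apply: eq_bigr => y _.
case xy: (x < y)%O; last by rewrite !mulr0n !mul0r.
congr (_ * _); rewrite /Nf mulr_sumr -big_split; apply: eq_bigr => c _ /=.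
case pc: (path _ y c); last by rewrite !mulr0n !mul0r mulr0 addr0.
rewrite Wset_notin ?notin_path //; last by apply: sub_path pc => a b /ltW.
by rewrite !mulr1n !mul1r mulr1.
Qed.

Lemma GfS' w k x : Gf w k.+1 x = w x * Nf k.+1 x + \sum_y (x < y)%O%:R * Gf w k y.
Proof.
rewrite GfS NfS mulr_sumr -big_split; apply: eq_bigr => y _.
by rewrite mulrDr mulrCA.
Qed.

Lemma HfS w m x : Hf w m.+1 x = Hf w m x + \sum_y (x < y)%O%:R * (w x * Lf m y + Hf w m y).
Proof.
rewrite /Hf cons_split sum_le_split; congr (_ + _).
  apply: eq_bigr => c _ /=; case pc: (path _ x c); last by rewrite !mulr0n !mul0r.
  by rewrite Wset_in // in_cons eqxx.
apply: eq_bigr => y _.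
case xy: (x < y)%O; last by rewrite !mulr0n !mul0r.
congr (_ * _); rewrite /Lf mulr_sumr -big_split; apply: eq_bigr => c _ /=.
case pc: (path _ y c); last by rewrite !mulr0n !mul0r mulr0 addr0.
rewrite Wset_notin ?notin_path //.
by rewrite !mulr1n !mul1r mulr1.
Qed.

Lemma KfS w m x : Kf w m.+1 x = w x * Lf m.+1 x + Kf w m x + \sum_y (x < y)%O%:R * Kf w m y.
Proof.
have -> : Kf w m.+1 x = \sum_y (x <= y)%O%:R * (w x * Lf m y + Kf w m y).
  rewrite /Kf cons_split; apply: eq_bigr => y _; congr (_ * _).
  rewrite /Lf mulr_sumr -big_split; apply: eq_bigr => c _ /=.
  by rewrite /Wpos big_cons mulrDr mulr1 mulrC.
rewrite sum_le_split LfS mulrDr mulr_sumr.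
under eq_bigr do rewrite mulrDr.
rewrite big_split /=.
have -> : \sum_y (x < y)%O%:R * (w x * Lf m y) = \sum_y w x * ((x < y)%O%:R * Lf m y).
  by apply: eq_bigr => y _; rewrite mulrCA.
by rewrite -!addrA; congr (_ + _); rewrite addrCA.
Qed.

Lemma pascal_sum m (a : nat -> rat) :
  \sum_(j < m.+2) ('C(m.+1, j))%:R * a j =
  \sum_(j < m.+1) ('C(m, j))%:R * a j + \sum_(j < m.+1) ('C(m, j))%:R * a j.+1.
Proof.
rewrite big_ord_recl [in X in _ = X + _]big_ord_recl !bin0.
under eq_bigr do rewrite lift0 binS natrD mulrDl.
rewrite big_split /= addrA; congr (_ + _); congr (_ + _).
rewrite big_ord_recr /= bin_small // mul0r addr0.
by apply: eq_bigr => i _; rewrite /bump leq0n add1n.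
Qed.

Lemma sum_exch m (c : nat -> rat) (f : P -> nat -> rat) x :
  \sum_y (x < y)%O%:R * \sum_(j < m) c j * f y j =
  \sum_(j < m) c j * \sum_y (x < y)%O%:R * f y j.
Proof.
under eq_bigr do rewrite mulr_sumr.
rewrite exchange_big; apply: eq_bigr => j _; rewrite mulr_sumr.
by apply: eq_bigr => y _; rewrite mulrCA.
Qed.

Lemma Lf_bin m x : Lf m x = \sum_(j < m.+1) ('C(m, j))%:R * Nf j x.
Proof.
elim: m x => [|m IH] x; first by rewrite big_ord1 Lf0 Nf0 bin0 mul1r.
rewrite LfS (pascal_sum m (fun j => Nf j x)) IH; congr (_ + _).
under eq_bigr do rewrite IH.
rewrite (sum_exch m.+1 (fun j => ('C(m,j))%:R) (fun y j => Nf j y)).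
by apply: eq_bigr => j _; rewrite NfS.
Qed.

Lemma Hf_bin w m x : Hf w m x = \sum_(j < m.+1) ('C(m, j))%:R * Gf w j x.
Proof.
elim: m x => [|m IH] x; first by rewrite big_ord1 Hf0 Gf0 bin0 mul1r.
rewrite HfS (pascal_sum m (fun j => Gf w j x)) IH; congr (_ + _).
under eq_bigr do rewrite IH Lf_bin mulr_sumr -big_split /=.
under eq_bigr do under eq_bigr do rewrite mulrCA -mulrDr.
rewrite (sum_exch m.+1 (fun j => ('C(m,j))%:R) (fun y j => w x * Nf j y + Gf w j y)).
by apply: eq_bigr => j _; rewrite GfS.
Qed.

Lemma Kf_bin w m x : Kf w m x = \sum_(j < m.+1) ('C(m.+1, j.+1))%:R * Gf w j x.
Proof.
elim: m x => [|m IH] x; first by rewrite big_ord1 Kf0 Gf0 bin1 mul1r.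
rewrite KfS IH.
under [in X in _ + X = _]eq_bigr do rewrite IH.
rewrite (sum_exch m.+1 (fun j => ('C(m.+1,j.+1))%:R) (fun y j => Gf w j y)).
have -> : \sum_(j < m.+2) ('C(m.+2, j.+1))%:R * Gf w j x =
  \sum_(j < m.+2) ('C(m.+1, j.+1))%:R * Gf w j x + \sum_(j < m.+2) ('C(m.+1, j))%:R * Gf w j x.
  by rewrite -big_split; apply: eq_bigr => j _; rewrite binS natrD mulrDl.
rewrite [in X in _ = X + _]big_ord_recr /= bin_small // mul0r addr0.
rewrite [in X in _ = _ + X]big_ord_recl bin0 mul1r Gf0.
under [in X in _ = _ + (_ + X)]eq_bigr do rewrite lift0 GfS' mulrDr.
rewrite big_split /= (Lf_bin m.+1) (big_ord_recl m.+1) bin0 Nf0 mul1r mulrDr mulr1 mulr_sumr.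
under [in X in _ + X + _ + _ = _]eq_bigr do rewrite lift0 mulrCA.
by rewrite -!addrA [RHS]addrCA; congr (_ + _); rewrite [RHS]addrCA.
Qed.

Lemma card_sum (T : finType) (A : {set T}) : (#|A|%:R : rat) = \sum_c (c \in A)%:R.
Proof.
rewrite -sum1_card natr_sum big_mkcond /=; apply: eq_bigr => c _.
by case: (c \in A); rewrite ?mulr1n ?mulr0n.
Qed.

Lemma sum_card_set n (S : {set n.-tuple P}) w :
  \sum_p w p * #|[set c in S | p \in (c : seq P)]|%:R =
  \sum_(c : n.-tuple P) (c \in S)%:R * Wset w c.
Proof.
under eq_bigr do rewrite card_sum mulr_sumr.
rewrite exchange_big; apply: eq_bigr => c _; rewrite /Wset mulr_sumr.
apply: eq_bigr => p _; rewrite inE andb_natr.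
by rewrite [LHS]mulrC -mulrA.
Qed.

Lemma sum_eq_pick (a : P) (T : P -> rat) : \sum_p (a == p)%:R * T p = T a.
Proof.
rewrite (bigD1 a) //= eqxx mulr1n mul1r big1 ?addr0 // => p /negbTE pa.
by rewrite eq_sym pa mul0r.
Qed.

Lemma sum_hat n (S : {set n.+1.-tuple P}) w :
  \sum_p w p * (\sum_(c in S) #|[set i | tnth c i == p]|%:R) =
  \sum_(c : n.+1.-tuple P) (c \in S)%:R * Wpos w c.
Proof.
under eq_bigr do rewrite big_mkcond mulr_sumr.
rewrite exchange_big; apply: eq_bigr => c _ /=.
case: (c \in S); last by rewrite mul0r big1 // => p _; rewrite mulr0.
rewrite mul1r.
under eq_bigr do rewrite card_sum mulr_sumr.
rewrite exchange_big /Wpos (big_tuple _ _ c) /=; apply: eq_bigr => i _.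
rewrite -[RHS](sum_eq_pick (tnth c i) w); apply: eq_bigr => p _.
by rewrite inE mulrC.
Qed.

Definition one : P -> rat := fun _ => 1.
Definition S_lt k (w : P -> rat) : rat := \sum_p w p * #|[set c in @chains d P k | p \in (c : seq P)]|%:R.
Definition S_le m (w : P -> rat) : rat := \sum_p w p * #|[set c in @mchains d P m | p \in (c : seq P)]|%:R.
Definition S_hat m (w : P -> rat) : rat := \sum_p w p * (\sum_(c in @mchains d P m) #|[set i : 'I_m.+1 | tnth c i == p]|%:R).

Lemma S_lt_G k w : S_lt k w = \sum_x Gf w k x.
Proof.
rewrite /S_lt sum_card_set.
under eq_bigr do rewrite inE.
rewrite (tupleS_sum k (fun s => (sorted Rlt s)%:R * Wset w s)).
by [].
Qed.

Lemma S_le_bin m w : S_le m w = \sum_(j < m.+1) ('C(m, j))%:R * S_lt j w.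
Proof.
have -> : S_le m w = \sum_x Hf w m x.
  rewrite /S_le sum_card_set.
under eq_bigr do rewrite inE.
rewrite (tupleS_sum m (fun s => (sorted Rle s)%:R * Wset w s)).
  by [].
under eq_bigr do rewrite Hf_bin.
rewrite exchange_big; apply: eq_bigr => j _; by rewrite S_lt_G mulr_sumr.
Qed.

Lemma S_hat_bin m w : S_hat m w = \sum_(j < m.+1) ('C(m.+1, j.+1))%:R * S_lt j w.
Proof.
have -> : S_hat m w = \sum_x Kf w m x.
  rewrite /S_hat sum_hat.
under eq_bigr do rewrite inE.
rewrite (tupleS_sum m (fun s => (sorted Rle s)%:R * Wpos w s)).
  by [].
under eq_bigr do rewrite Kf_bin.
rewrite exchange_big; apply: eq_bigr => j _; by rewrite S_lt_G mulr_sumr.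
Qed.

Definition dd (p : P) : rat := (ddeg p)%:R.

Lemma Wset_one_uniq (c : seq P) : uniq c -> Wset one c = (size c)%:R.
Proof.
move=> uc; rewrite -(card_uniqP uc) -cardsE card_sum /Wset.
by apply: eq_bigr => p _; rewrite /one mulr1 inE.
Qed.

Lemma den_chain k : ((k.+1)%:R * #|@chains d P k|%:R : rat) = S_lt k one.
Proof.
rewrite S_lt_G.
have -> : \sum_x Gf one k x = S_lt k one by rewrite S_lt_G.
rewrite /S_lt sum_card_set card_sum mulr_sumr; apply: eq_bigr => c _.
rewrite inE; case sc: (sorted _ _); last by rewrite !mulr0n mulr0 mul0r.
rewrite Wset_one_uniq ?size_tuple ?mulr1n ?mulr1 ?mul1r //.
apply: (sorted_uniq _ _ sc) => [y x z|x]; [exact: lt_trans | exact: ltxx].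
Qed.

Lemma den_hat m : ((m.+1)%:R * #|@mchains d P m|%:R : rat) = S_hat m one.
Proof.
rewrite /S_hat sum_hat card_sum mulr_sumr; apply: eq_bigr => c _.
case: (c \in _); last by rewrite !mulr0n mulr0 mul0r.
rewrite /Wpos (big_tuple _ _ c) /= sumr_const card_ord /one.
by rewrite mulr1n mulr1 mul1r.
Qed.

Lemma E_chain k : expect (@chain_dist d P k) (@ddeg d P) = S_lt k dd / S_lt k one.
Proof.
rewrite /expect /chain_dist -den_chain.
under eq_bigr do rewrite mulrA.
by rewrite -mulr_suml.
Qed.

Lemma E_mch m : expect (@mchain_dist d P m) (@ddeg d P) = S_le m dd / S_le m one.
Proof.
rewrite /expect /mchain_dist.
under eq_bigr do rewrite mulrA.
rewrite -mulr_suml; congr (_ / _); try by [].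
all: try by rewrite /S_le; apply: eq_bigr => p _; rewrite /one mul1r.
Qed.

Lemma E_hat m : expect (@mchain_hat_dist d P m) (@ddeg d P) = S_hat m dd / S_hat m one.
Proof.
rewrite /expect /mchain_hat_dist -den_hat.
under eq_bigr do rewrite mulrA.
rewrite -mulr_suml; congr (_ / _); try by [].
all: try by rewrite /S_hat; apply: eq_bigr => p _; rewrite mulr_sumr.
Qed.

Lemma S_lt_vanish j w : @chains d P j = set0 -> S_lt j w = 0.
Proof.
move=> h; rewrite /S_lt big1 // => p _.
have -> : [set c in @chains d P j | p \in (c : seq P)] = set0.
  by apply/setP => c; rewrite h !inE.
by rewrite cards0 mulr0.
Qed.

Lemma chains_down k : @chains d P k.+1 != set0 -> @chains d P k != set0.
Proof.
case/set0Pn => c; rewrite inE; case/tupleP: c => x c /= sc.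
apply/set0Pn; exists c; rewrite inE.
exact: path_sorted sc.
Qed.

Lemma chains_ne r k : @chains d P r != set0 -> (k <= r)%N -> @chains d P k != set0.
Proof.
move=> hr kr; move: hr; rewrite -(subnKC kr).
elim: (r - k)%N => [|n IH]; first by rewrite addn0.
rewrite addnS => h; apply: IH; exact: chains_down.
Qed.

Lemma path_nseq (x : P) n : path Rle x (nseq n x).
Proof. by elim: n => //= n ->; rewrite lexx. Qed.

Lemma mchains_ne (x0 : P) m : @mchains d P m != set0.
Proof.
apply/set0Pn; exists [tuple of nseq m.+1 x0]; rewrite inE /=.
exact: path_nseq.
Qed.

Lemma divE (a b e : rat) : b != 0 -> (a / b = e) <-> (a - e * b = 0).
Proof.
move=> b0; split => [<-|/subr0_eq ->]; first by rewrite divfK // subrr.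
by rewrite mulfK.
Qed.

Lemma tri (X : nat -> rat) (b : nat -> nat -> nat) r :
  (forall m, b m m = 1%N) -> (forall j, (r < j)%N -> X j = 0) ->
  (forall m, (m <= r)%N -> \sum_(j < m.+1) (b m j)%:R * X j = 0) -> forall j, X j = 0.
Proof.
move=> b1 Xr H; elim/ltn_ind => j IH.
case: (leqP j r) => jr; last exact: Xr.
have := H j jr; rewrite big_ord_recr /= big1 ?add0r => [|i _].
  by rewrite b1 mul1r.
by rewrite IH ?mulr0 // ltn_ord.
Qed.

Lemma main_aux (r : nat)
  (hr_ex : @chains d P r != set0)
  (hr_max : forall k : nat, @chains d P k != set0 -> (k <= r)%N) :
  [<-> (forall k : nat, (k <= r)%N ->
          expect (@chain_dist d P k) (@ddeg d P) = expect (@uni d P) (@ddeg d P));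
       (forall m : nat,
          expect (@mchain_dist d P m) (@ddeg d P) = expect (@uni d P) (@ddeg d P));
       (forall m : nat, (m <= r)%N ->
          expect (@mchain_dist d P m) (@ddeg d P) = expect (@uni d P) (@ddeg d P));
       (forall m : nat,
          expect (@mchain_hat_dist d P m) (@ddeg d P) = expect (@uni d P) (@ddeg d P));
       (forall m : nat, (m <= r)%N ->
          expect (@mchain_hat_dist d P m) (@ddeg d P) = expect (@uni d P) (@ddeg d P))].
Proof.
set e := expect (@uni d P) (@ddeg d P).
pose X j := S_lt j dd - e * S_lt j one.
have [c0 _] := set0Pn _ hr_ex.
pose x0 := thead c0.
have van j w : (r < j)%N -> S_lt j w = 0.
  move=> rj; apply: S_lt_vanish; apply/eqP; apply: contraTT rj => h.
  by rewrite -leqNgt; exact: hr_max.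
have Xr j : (r < j)%N -> X j = 0 by move=> rj; rewrite /X !van // mulr0 subr0.
have ne j : (j <= r)%N -> S_lt j one != 0.
  move=> jr; rewrite -den_chain mulf_neq0 ?pnatr_eq0 // -lt0n card_gt0.
  exact: chains_ne hr_ex jr.
have neh m : S_hat m one != 0.
  by rewrite -den_hat mulf_neq0 ?pnatr_eq0 // -lt0n card_gt0 (mchains_ne x0).
have nel m : S_le m one != 0.
  rewrite /S_le /one.
  under eq_bigr do rewrite mul1r.
  rewrite -natr_sum pnatr_eq0 -lt0n (bigD1 x0) //= ltn_addr // card_gt0.
  apply/set0Pn; exists [tuple of nseq m.+1 x0]; rewrite !inE /= eqxx /=.
  by rewrite andbT path_nseq.
have Xle m : S_le m dd - e * S_le m one = \sum_(j < m.+1) ('C(m, j))%:R * X j.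
  rewrite !S_le_bin mulr_sumr -sumrB; apply: eq_bigr => j _.
  by rewrite /X mulrBr mulrCA.
have Xh m : S_hat m dd - e * S_hat m one = \sum_(j < m.+1) ('C(m.+1, j.+1))%:R * X j.
  rewrite !S_hat_bin mulr_sumr -sumrB; apply: eq_bigr => j _.
  by rewrite /X mulrBr mulrCA.
have Z1 : (forall j, X j = 0) -> forall k : nat, (k <= r)%N ->
    expect (@chain_dist d P k) (@ddeg d P) = e.
  by move=> Z k kr; rewrite E_chain; apply/(divE _ _ (ne k kr)); exact: Z.
have Z2 : (forall j, X j = 0) -> forall m,
    expect (@mchain_dist d P m) (@ddeg d P) = e.
  move=> Z m; rewrite E_mch; apply/(divE _ _ (nel m)); rewrite Xle.
  by rewrite big1 // => j _; rewrite Z mulr0.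
have Z4 : (forall j, X j = 0) -> forall m,
    expect (@mchain_hat_dist d P m) (@ddeg d P) = e.
  move=> Z m; rewrite E_hat; apply/(divE _ _ (neh m)); rewrite Xh.
  by rewrite big1 // => j _; rewrite Z mulr0.
have Z3 : (forall m, (m <= r)%N -> expect (@mchain_dist d P m) (@ddeg d P) = e) ->
    forall j, X j = 0.
  move=> H; apply: (@tri X (fun m j => 'C(m, j)) r) => // [m|m mr]; first exact: binn.
  by rewrite -Xle; apply/(divE _ _ (nel m)); rewrite -E_mch H.
have Z5 : (forall m, (m <= r)%N -> expect (@mchain_hat_dist d P m) (@ddeg d P) = e) ->
    forall j, X j = 0.
  move=> H; apply: (@tri X (fun m j => 'C(m.+1, j.+1)) r) => // [m|m mr]; first exact: binn.
  by rewrite -Xh; apply/(divE _ _ (neh m)); rewrite -E_hat H.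
have Z0 : (forall k : nat, (k <= r)%N ->
    expect (@chain_dist d P k) (@ddeg d P) = e) -> forall j, X j = 0.
  move=> H j; case: (leqP j r) => jr; last exact: Xr.
  by rewrite /X; apply/(divE _ _ (ne j jr)); rewrite -E_chain H.
tfae.
- by move=> H; apply: Z2; apply: Z0.
- by move=> H m _; apply: H.
- by move=> H; apply: Z4; apply: Z3.
- by move=> H m _; apply: H.
- by move=> H; apply: Z1; apply: Z5.
Qed.

End Aux.

Theorem proposition2p4 (d : Order.disp_t) (P : finPOrderType d) (r : nat)
  (hr_ex : @chains d P r != set0)
  (hr_max : forall k : nat, @chains d P k != set0 -> (k <= r)%N) :
  [<-> (forall k : nat, (k <= r)%N ->
          expect (@chain_dist d P k) (@ddeg d P) = expect (@uni d P) (@ddeg d P));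
       (forall m : nat,
          expect (@mchain_dist d P m) (@ddeg d P) = expect (@uni d P) (@ddeg d P));
       (forall m : nat, (m <= r)%N ->
          expect (@mchain_dist d P m) (@ddeg d P) = expect (@uni d P) (@ddeg d P));
       (forall m : nat,
          expect (@mchain_hat_dist d P m) (@ddeg d P) = expect (@uni d P) (@ddeg d P));
       (forall m : nat, (m <= r)%N ->
          expect (@mchain_hat_dist d P m) (@ddeg d P) = expect (@uni d P) (@ddeg d P))].
Proof. exact: (@main_aux d P r hr_ex hr_max). Qed.
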